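(* Consider a fair division instance with $n$ agents, $m$ divisible goods, additive valuations and generalized assignment constraints. For any weight vector $w\in\mathbb{R}_+^n$ with all components positive, and any feasible allocation $x=(x_1,\dots,x_n)$ maximizing $\sum_{i=1}^n w_i v_i(x_i)$ over all feasible allocations, the envy graph of $x$ is acyclic.
   Context: An allocation is $x=(x_1,\dots,x_n)$ with $x_i\in[0,1]^m$ and $\sum_i x_{i,g}\le 1$ for each good $g$. Additive valuations: $v_i(y)=\sum_g y_g v_{i,g}$, $v_{i,g}\ge0$. Generalized assignment constraints: agent $i$ has sizes $s_i(g)\ge0$ and budget $B_i\ge0$; a bundle $y$ is feasible for $i$ iff $\sum_g s_i(g)y_g\le B_i$; an allocation is feasible if each $x_i$ is feasible for $i$. Agent $i$ (feasibly) envies agent $h$ in $x$ if there is a bundle $y\le x_h$ (componentwise) feasible for $i$ with $v_i(y)>v_i(x_i)$. The envy graph of $x$ is the directed graph on vertex set $[n]$ with an edge $i\to h$ iff $i$ envies $h$. *)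

(* Defs.v *)
From mathcomp Require Import all_boot all_order all_algebra.
Set Implicit Arguments. Unset Strict Implicit. Unset Printing Implicit Defensive.
Import Order.TTheory GRing.Theory Num.Theory.
Local Open Scope ring_scope.

Section FairDivision.
Variables (R : realFieldType) (n m : nat).

(* A bundle: fractions y_g in [0,1] of each good g. *)
Definition bundle := 'I_m -> R.
Definition allocation := 'I_n -> bundle.

Definition is_bundle (y : bundle) : Prop := forall g, 0 <= y g /\ y g <= 1.

Definition is_allocation (x : allocation) : Prop :=
  (forall i, is_bundle (x i)) /\ (forall g, \sum_(i < n) x i g <= 1).

Definition value (v : 'I_n -> 'I_m -> R) (i : 'I_n) (y : bundle) : R :=
  \sum_(g < m) y g * v i g.

Definition feasible_for (s : 'I_n -> 'I_m -> R) (B : 'I_n -> R)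
  (i : 'I_n) (y : bundle) : Prop :=
  \sum_(g < m) s i g * y g <= B i.

Definition feasible_allocation s B (x : allocation) : Prop :=
  is_allocation x /\ forall i, feasible_for s B i (x i).

Definition envies v s B (x : allocation) (i h : 'I_n) : Prop :=
  exists y : bundle,
    (forall g, 0 <= y g /\ y g <= x h g) /\
    feasible_for s B i y /\ value v i (x i) < value v i y.

(* The envy graph (edge i -> h iff i envies h) has no directed cycle:
   there is no closed walk c_0 -> c_1 -> ... -> c_k -> c_0 (k >= 0). *)
Definition envy_graph_acyclic v s B (x : allocation) : Prop :=
  forall (k : nat) (c : 'I_k.+1 -> 'I_n),
    ~ (forall j : 'I_k.+1, envies v s B x (c j) (c (ordS j))).

End FairDivision.

(* Main.v *)
Require Import Defs.
From mathcomp Require Import all_boot all_order all_algebra.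
From mathcomp Require Import lra.
From Stdlib Require Import ClassicalEpsilon.
Import Order.TTheory GRing.Theory Num.Theory.
Local Open Scope ring_scope.

Lemma lin_shift (R : realFieldType) (m K : nat) (f : 'I_m -> R) (xi : 'I_m -> R)
  (P : pred 'I_K) (y : 'I_K -> 'I_m -> R) (a : R) :
  \sum_(g < m) f g * (xi g + a * \sum_(j < K | P j) (y j g - xi g)) =
  \sum_(g < m) f g * xi g +
    a * \sum_(j < K | P j) (\sum_(g < m) f g * y j g - \sum_(g < m) f g * xi g).
Proof.
under eq_bigr do rewrite mulrDr.
rewrite big_split /=; congr (_ + _).
have -> : \sum_(j < K | P j) (\sum_(g < m) f g * y j g - \sum_(g < m) f g * xi g)
   = \sum_(j < K | P j) \sum_(g < m) f g * (y j g - xi g).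
  by apply: eq_bigr => j _; rewrite -sumrB; apply: eq_bigr => g _; rewrite mulrBr.
rewrite (exchange_big_dep xpredT) //= mulr_sumr.
apply: eq_bigr => g _.
rewrite !mulr_sumr; apply: eq_big => [j|j _]; [by rewrite andbT | by rewrite mulrCA].

Qed.

Lemma foo (R : realFieldType) (S B Y a d : R) : S <= B -> Y <= B * d -> a * d <= 1 -> 0 < a -> 0 <= d ->
  S + a * (Y - S * d) <= B.
Proof.
move=> h1 h2 h3 h4 h5.
have h6 : 0 <= (B - S) * (1 - a * d) by apply: mulr_ge0; lra.
have h7 : 0 <= a * (B * d - Y) by apply: mulr_ge0; lra.
lra.
Qed.
Lemma bar (R : realFieldType) (x Y a d : R) : 0 <= x -> 0 <= Y -> a * d <= 1 -> 0 < a -> 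
  0 <= x + a * (Y - x * d).
Proof.
move=> h1 h2 h3 h4.
have h6 : 0 <= x * (1 - a * d) by apply: mulr_ge0; lra.
have h7 : 0 <= a * Y by apply: mulr_ge0; lra.
lra.
Qed.

Theorem lemma2 (R : realFieldType) (n m : nat)
  (v : 'I_n -> 'I_m -> R) (s : 'I_n -> 'I_m -> R) (B : 'I_n -> R)
  (hv : forall i g, 0 <= v i g) (hs : forall i g, 0 <= s i g)
  (hB : forall i, 0 <= B i)
  (w : 'I_n -> R) (hw : forall i, 0 < w i)
  (x : allocation R n m)
  (hx : feasible_allocation s B x)
  (hmax : forall x' : allocation R n m, feasible_allocation s B x' ->
     \sum_(i < n) w i * value v i (x' i) <= \sum_(i < n) w i * value v i (x i)) :
  envy_graph_acyclic v s B x.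
Proof.
move=> k c Henv.
pose y : 'I_k.+1 -> bundle R m := fun j => proj1_sig (constructive_indefinite_description _ (Henv j)).
have Hy : forall j, (forall g, 0 <= y j g /\ y j g <= x (c (ordS j)) g) /\
    feasible_for s B (c j) (y j) /\ value v (c j) (x (c j)) < value v (c j) (y j).
  by move=> j; rewrite /y; case: constructive_indefinite_description.
pose a : R := (k.+1)%:R^-1.
have ha0 : 0 < a by rewrite /a invr_gt0 ltr0n.
pose x' : allocation R n m := fun i g => x i g + a * \sum_(j < k.+1 | c j == i) (y j g - x i g).
have hdK : forall i, a * #|[pred j | c j == i]|%:R <= 1.
  move=> i; rewrite /a ler_pdivrMl ?ltr0n // mulr1 ler_nat.
  by apply: leq_trans (max_card _) _; rewrite card_ord.
case: hx => [[hb hsum] hf].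
have Esum : forall (i : 'I_n) (F : 'I_k.+1 -> R),
    \sum_(j < k.+1 | c j == i) F j = \sum_(j in [pred j | c j == i]) F j by [].
have feas : feasible_allocation s B x'.
  split; last first.
    move=> i; rewrite /feasible_for /x' lin_shift.
    set S := \sum_(g < m) s i g * x i g.
    have hS : S <= B i by exact: hf.
    rewrite sumrB sumr_const.
    have : \sum_(j < k.+1 | c j == i) \sum_(g < m) s i g * y j g <=
           \sum_(j < k.+1 | c j == i) B i.
      by apply: ler_sum => j /eqP <-; case: (Hy j) => _ [].
    rewrite sumr_const => H1.
    rewrite -[B i *+ _]mulr_natr in H1; rewrite -[S *+ _]mulr_natr.
    by apply: foo => //; exact: hdK.
  have hnn : forall i g, 0 <= x' i g.
    move=> i g; rewrite /x' sumrB sumr_const -[x i g *+ _]mulr_natr.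
    apply: bar => //; [exact: (hb i g).1 | | exact: hdK].
    by apply: sumr_ge0 => j _; case: (Hy j) => [/(_ g) []].
  have hS : forall g, \sum_(i < n) x' i g <= 1.
    move=> g; rewrite /x' big_split /= -mulr_sumr.
    rewrite (exchange_big_dep xpredT) //=.
    have -> : \sum_(j < k.+1) \sum_(i < n | c j == i) (y j g - x i g) =
              \sum_(j < k.+1) (y j g - x (c j) g).
      apply: eq_bigr => j _; rewrite (big_pred1 (c j)) // => i /=.
    rewrite sumrB.
    have : \sum_(j < k.+1) y j g <= \sum_(j < k.+1) x (c j) g.
      rewrite [X in _ <= X](reindex_inj (@ordS_inj k.+1)) /=.
      by apply: ler_sum => j _; case: (Hy j) => [/(_ g) []].
    move=> H.
    have H2 : a * (\sum_(j < k.+1) y j g - \sum_(j < k.+1) x (c j) g) <= 0.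
      by apply: mulr_ge0_le0; [exact: ltW | rewrite subr_le0].
    have := hsum g. lra.
  split=> // i g; split; first exact: hnn.
  apply: le_trans (hS g).
  rewrite (bigD1 i) //= lerDl; apply: sumr_ge0 => *; exact: hnn.
have := hmax _ feas.
apply/negP; rewrite -ltNge.
have Ev : forall i, value v i (x' i) = value v i (x i) +
   a * \sum_(j < k.+1 | c j == i) (value v i (y j) - value v i (x i)).
  move=> i; rewrite /value /x'.
  under eq_bigr do rewrite mulrC.
  rewrite lin_shift.
  by congr (_ + _ * _); [|apply: eq_bigr => j _; congr (_ - _)];
     apply: eq_bigr => g _; rewrite mulrC.
rewrite [X in _ < X](eq_bigr (fun i => w i * value v i (x i) + a * (w i *
   \sum_(j < k.+1 | c j == i) (value v i (y j) - value v i (x i))))); last first.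
  by move=> i _; rewrite Ev mulrDr mulrCA.
rewrite big_split /= ltrDl -mulr_sumr pmulr_rgt0 //.
under eq_bigr do rewrite mulr_sumr.
rewrite (exchange_big_dep xpredT) //=.
have -> : \sum_(j < k.+1) \sum_(i < n | c j == i) w i * (value v i (y j) - value v i (x i)) =
          \sum_(j < k.+1) w (c j) * (value v (c j) (y j) - value v (c j) (x (c j))).
  by apply: eq_bigr => j _; rewrite (big_pred1 (c j)) // => i /=.
rewrite (bigD1 ord0) //= ltr_pwDl //.
  apply: mulr_gt0 => //; rewrite subr_gt0; by case: (Hy ord0) => _ [].
apply: sumr_ge0 => j _; apply: mulr_ge0; first exact: ltW.
by rewrite subr_ge0; case: (Hy j) => _ [_ /ltW].
Qed.
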